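(* Let $f \in \mathcal{H}$ be such that $f(t)/t^{-n} \to 0$ as $t\to\infty$ for every $n \in \mathbb{N}$. Then for all $\ell, n \in \mathbb{N}$ we have $f^{(\ell)}(t)/t^{-n} \to 0$ as $t \to\infty$.
   Context: $\mathcal{H}$ denotes the union of all Hardy fields, where a Hardy field is a subfield of the ring of germs at $+\infty$ of real-valued functions defined on half-lines $(c,\infty)$ which is closed under differentiation (so every element of $\mathcal{H}$ is eventually infinitely differentiable and its derivatives lie in $\mathcal{H}$). *)

(* Defs.v *)
From Stdlib Require Import Reals.
From Coquelicot Require Import Coquelicot.
Open Scope R_scope.

Definition ev_eq (f g : R -> R) : Prop :=
  exists c : R, forall t, c < t -> f t = g t.

(* A Hardy field, represented as a set H of representatives of germs at +oo
   (closed under equality of germs), forming a subfield of the ring of germs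
   and closed under differentiation. *)
Record hardy_field (H : (R -> R) -> Prop) : Prop := {
  hf_germ  : forall f g, H f -> ev_eq f g -> H g;
  hf_zero  : H (fun _ => 0);
  hf_one   : H (fun _ => 1);
  hf_add   : forall f g, H f -> H g -> H (fun t => f t + g t);
  hf_opp   : forall f, H f -> H (fun t => - f t);
  hf_mul   : forall f g, H f -> H g -> H (fun t => f t * g t);
  hf_inv   : forall f, H f -> ~ ev_eq f (fun _ => 0) ->
               exists g, H g /\ ev_eq (fun t => f t * g t) (fun _ => 1);
  hf_deriv : forall f, H f ->
               (exists c : R, forall t, c < t -> ex_derive f t) /\ H (Derive f)
}.

Definition in_hardy (f : R -> R) : Prop :=
  exists H, hardy_field H /\ H f.

(* Main.v *)
Require Import Defs.
From Stdlib Require Import Reals Lra Classical.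
From Coquelicot Require Import Coquelicot.
Open Scope R_scope.

Lemma cont_of_der u t : ex_derive u t -> continuity_pt u t.
Proof. intros. apply continuity_pt_filterlim. apply (ex_derive_continuous (K:=R_AbsRing) (V:=R_NormedModule)). exact H. Qed.

Lemma mvt u a b c : c < a -> a < b -> (forall t, c < t -> ex_derive u t) ->
  exists x, a <= x <= b /\ u b - u a = Derive u x * (b - a).
Proof.
  intros ca ab D.
  destruct (MVT_gen u a b (Derive u)) as [x [Hx E]].
  - intros x Hx. rewrite Rmin_left in Hx by lra. rewrite Rmax_right in Hx by lra.
    apply Derive_correct. apply D. lra.
  - intros x Hx. rewrite Rmin_left in Hx by lra. rewrite Rmax_right in Hx by lra.
    apply cont_of_der. apply D. lra.
  - exists x. rewrite Rmin_left in Hx by lra. rewrite Rmax_right in Hx by lra. auto.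
Qed.

Lemma mono u c : (forall t, c < t -> ex_derive u t) -> (forall t, c < t -> 0 <= Derive u t) ->
  forall s t, c < s -> s <= t -> u s <= u t.
Proof.
  intros D P s t cs st. destruct (Req_dec s t) as [->|ne]; [lra|].
  destruct (mvt u s t c) as [x [Hx E]]; try lra; auto.
  assert (0 <= Derive u x * (t - s)). { apply Rmult_le_pos. apply P; lra. lra. }
  lra.
Qed.

Definition lim0 (g : R -> R) := forall eps, 0 < eps -> exists M, forall t, M < t -> Rabs (g t) < eps.
Definition Q (g : R -> R) := forall n : nat, lim0 (fun t => g t * t ^ n).

Lemma key g c : (forall t, c < t -> ex_derive g t) -> (forall t, c < t -> ex_derive (Derive g) t) ->
  (forall t, c < t -> 0 <= Derive (Derive g) t) -> lim0 g ->
  forall s t, c < s -> s <= t -> Rabs (Derive g t) <= Rabs (Derive g s).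
Proof.
  intros D1 D2 P L.
  assert (M1 := mono (Derive g) c D2 P).
  assert (neg : forall t, c < t -> Derive g t <= 0).
  { intros t0 ct0. destruct (Rle_dec (Derive g t0) 0) as [h|h]; auto. exfalso.
    assert (pos : 0 < Derive g t0) by lra.
    destruct (L 1 Rlt_0_1) as [M HM].
    set (T := Rmax M t0 + (1 + Rabs (g t0)) / Derive g t0 + 1).
    assert (hq : 0 <= (1 + Rabs (g t0)) / Derive g t0).
    { apply Rle_mult_inv_pos. pose proof (Rabs_pos (g t0)); lra. exact pos. }
    assert (TM : M < T) by (unfold T; pose proof (Rmax_l M t0); lra).
    assert (Tt : t0 < T) by (unfold T; pose proof (Rmax_r M t0); lra).
    destruct (mvt g t0 T c) as [x [Hx E]]; auto.
    assert (gx : Derive g t0 <= Derive g x) by (apply M1; lra).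
    assert (h1 : Derive g t0 * (T - t0) <= Derive g x * (T - t0)).
    { apply Rmult_le_compat_r; lra. }
    assert (h2 : Derive g t0 * ((1 + Rabs (g t0)) / Derive g t0) <= Derive g t0 * (T - t0)).
    { apply Rmult_le_compat_l. lra. unfold T. pose proof (Rmax_r M t0). lra. }
    assert (h3 : Derive g t0 * ((1 + Rabs (g t0)) / Derive g t0) = 1 + Rabs (g t0)) by (field; lra).
    specialize (HM T TM). pose proof (Rle_abs (g T)). pose proof (Rabs_pos (g t0)).
    pose proof (Rle_abs (- g t0)). rewrite Rabs_Ropp in H1. lra. }
  intros s t cs st.
  rewrite (Rabs_left1 _ (neg t ltac:(lra))). rewrite (Rabs_left1 _ (neg s ltac:(lra))).
  pose proof (M1 s t cs st). lra.
Qed.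

Lemma final g c : (forall t, c < t -> ex_derive g t) ->
  (forall s t, c < s -> s <= t -> Rabs (Derive g t) <= Rabs (Derive g s)) ->
  Q g -> Q (Derive g).
Proof.
  intros D Mo Hq n eps ep.
  assert (p2 : 0 < 2 ^ n) by (apply pow_lt; lra).
  destruct (Hq n (eps/4) ltac:(lra)) as [M1 H1].
  destruct (Hq n (eps/(4 * 2^n))) as [M2 H2].
  { apply Rdiv_lt_0_compat; lra. }
  exists (Rmax (2*c) (Rmax 2 (Rmax M1 (2*M2)))). intros t Ht.
  pose proof (Rmax_l (2*c) (Rmax 2 (Rmax M1 (2*M2)))).
  pose proof (Rmax_r (2*c) (Rmax 2 (Rmax M1 (2*M2)))).
  pose proof (Rmax_l 2 (Rmax M1 (2*M2))). pose proof (Rmax_r 2 (Rmax M1 (2*M2))).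
  pose proof (Rmax_l M1 (2*M2)). pose proof (Rmax_r M1 (2*M2)).
  destruct (mvt g (t/2) t c) as [x [Hx E]]; try lra; auto.
  assert (hx : Rabs (Derive g t) <= Rabs (Derive g x)) by (apply Mo; lra).
  specialize (H1 t ltac:(lra)). specialize (H2 (t/2) ltac:(lra)).
  assert (ptn : 0 < t ^ n) by (apply pow_lt; lra).
  assert (e2 : t ^ n = 2 ^ n * (t/2)^n) by (rewrite <- Rpow_mult_distr; f_equal; field).
  assert (H2' : Rabs (g (t/2) * t ^ n) < eps / 4).
  { rewrite e2, Rabs_mult, Rabs_mult, (Rabs_right (2^n)) by lra.
    rewrite Rabs_mult in H2.
    replace (eps/4) with (2^n * (eps / (4 * 2^n))) by (field; lra).
    rewrite Rmult_comm, Rmult_assoc, (Rmult_comm _ (2^n)).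
    apply Rmult_lt_compat_l; [lra|]. rewrite (Rmult_comm (2^n) 4), Rmult_comm. exact H2. }
  assert (k : Rabs (Derive g t) * (t/2) <= Rabs (g t) + Rabs (g (t/2))).
  { apply Rle_trans with (Rabs (Derive g x) * (t/2)).
    apply Rmult_le_compat_r; lra.
    assert (ee : Rabs (Derive g x) * (t/2) = Rabs (g t - g (t/2))).
    { rewrite E, Rabs_mult, (Rabs_right (t - t/2)) by lra. f_equal. field. }
    rewrite ee.
    replace (g t - g (t/2)) with (g t + - g (t/2)) by ring.
    rewrite <- (Rabs_Ropp (g (t/2))). apply Rabs_triang. }
  assert (k2 : Rabs (Derive g t * t^n) * (t/2) <= Rabs (g t * t^n) + Rabs (g (t/2) * t^n)).
  { rewrite !Rabs_mult, (Rabs_right (t^n)) by lra.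
    replace (Rabs (Derive g t) * t ^ n * (t / 2)) with ((Rabs (Derive g t) * (t/2)) * t^n) by ring.
    rewrite <- Rmult_plus_distr_r. apply Rmult_le_compat_r; lra. }
  pose proof (Rabs_pos (Derive g t * t^n)).
  assert (Rabs (Derive g t * t^n) <= Rabs (Derive g t * t^n) * (t/2)).
  { rewrite <- (Rmult_1_r (Rabs _)) at 1. apply Rmult_le_compat_l; lra. }
  lra.
Qed.

Lemma hsign H g : hardy_field H -> H g ->
  ev_eq g (fun _ => 0) \/ (exists c, forall t, c < t -> 0 < g t) \/ (exists c, forall t, c < t -> g t < 0).
Proof.
  intros hH Hg. destruct (classic (ev_eq g (fun _ => 0))) as [z|nz]; [now left|right].
  destruct (hf_inv H hH g Hg nz) as [h [_ [c1 Hc1]]].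
  destruct (hf_deriv H hH g Hg) as [[c2 Hc2] _].
  set (c := Rmax c1 c2).
  assert (nz' : forall t, c < t -> g t <> 0).
  { intros t ct e. pose proof (Rmax_l c1 c2). specialize (Hc1 t ltac:(unfold c in *; lra)).
    simpl in Hc1. rewrite e in Hc1. lra. }
  assert (ct : forall t, c < t -> continuity_pt g t).
  { intros t ctt. apply cont_of_der. apply Hc2. pose proof (Rmax_r c1 c2). unfold c in *; lra. }
  destruct (Rlt_le_dec 0 (g (c+1))) as [p|p].
  - left. exists c. intros t Ht. destruct (Rlt_le_dec 0 (g t)) as [q|q]; auto. exfalso.
    destruct (Req_dec (g t) 0) as [e|e]; [now apply (nz' t)|].
    destruct (Rlt_le_dec t (c+1)).
    + destruct (Ranalysis5.IVT_interv g t (c+1)) as [z [Hz Ez]]; try lra.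
      intros; apply ct; lra. apply (nz' z); lra.
    + destruct (Req_dec t (c+1)) as [->|ne]; [lra|].
      destruct (Ranalysis5.IVT_interv (fun x => - g x) (c+1) t) as [z [Hz Ez]]; try lra.
      intros; apply continuity_pt_opp; apply ct; lra. apply (nz' z); lra.
  - right. exists c. intros t Ht. destruct (Rlt_le_dec (g t) 0) as [q|q]; auto. exfalso.
    destruct (Req_dec (g t) 0) as [e|e]; [now apply (nz' t)|].
    assert (gc : g (c+1) <> 0) by (apply nz'; lra).
    destruct (Rlt_le_dec t (c+1)).
    + destruct (Ranalysis5.IVT_interv (fun x => - g x) t (c+1)) as [z [Hz Ez]]; try lra.
      intros; apply continuity_pt_opp; apply ct; lra. apply (nz' z); lra.
    + destruct (Req_dec t (c+1)) as [->|ne]; [lra|].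
      destruct (Ranalysis5.IVT_interv g (c+1) t) as [z [Hz Ez]]; try lra.
      intros; apply ct; lra. apply (nz' z); lra.
Qed.

Lemma lim0_of_Q g : Q g -> lim0 g.
Proof.
  intros Hq eps ep. destruct (Hq 0%nat eps ep) as [M HM]. exists M. intros t Ht.
  specialize (HM t Ht). simpl in HM. rewrite Rmult_1_r in HM. exact HM.
Qed.

Lemma step H g : hardy_field H -> H g -> Q g -> H (Derive g) /\ Q (Derive g).
Proof.
  intros hH Hg Hq.
  destruct (hf_deriv H hH g Hg) as [[c0 D0] H1].
  destruct (hf_deriv H hH _ H1) as [[c1 D1] H2].
  destruct (hf_deriv H hH _ H2) as [[c2 D2] H3].
  split; auto.
  assert (L := lim0_of_Q g Hq).
  destruct (hsign H _ hH H2) as [[c3 S]|[[c3 S]|[c3 S]]];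
  set (c := Rmax (Rmax c0 c1) (Rmax c2 c3));
  pose proof (Rmax_l (Rmax c0 c1) (Rmax c2 c3)); pose proof (Rmax_r (Rmax c0 c1) (Rmax c2 c3));
  pose proof (Rmax_l c0 c1); pose proof (Rmax_r c0 c1); pose proof (Rmax_l c2 c3); pose proof (Rmax_r c2 c3).
  - apply (final g c). intros; apply D0; unfold c in *; lra.
    apply key. intros; apply D0; unfold c in *; lra. intros; apply D1; unfold c in *; lra.
    intros t ht. simpl in S. rewrite S by (unfold c in *; lra). lra. exact L. exact Hq.
  - apply (final g c). intros; apply D0; unfold c in *; lra.
    apply key. intros; apply D0; unfold c in *; lra. intros; apply D1; unfold c in *; lra.
    intros t ht. left. apply S; unfold c in *; lra. exact L. exact Hq.
  - apply (final g c). intros; apply D0; unfold c in *; lra.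
    intros s t cs st.
    set (h := fun t => - g t).
    assert (Dh : forall t, Derive h t = - Derive g t) by (intros; apply Derive_opp).
    assert (K := key h c).
    rewrite <- (Rabs_Ropp (Derive g t)), <- (Rabs_Ropp (Derive g s)), <- !Dh.
    apply K; auto.
    + intros t0 ht0. apply (ex_derive_opp (K:=R_AbsRing) (V:=R_NormedModule)). apply D0; unfold c in *; lra.
    + intros t0 ht0. apply (ex_derive_ext (fun t => - Derive g t)). intros; symmetry; apply Dh.
      apply (ex_derive_opp (K:=R_AbsRing) (V:=R_NormedModule)). apply D1; unfold c in *; lra.
    + intros t0 ht0. rewrite (Derive_ext _ (fun t => - Derive g t)) by apply Dh.
      rewrite Derive_opp. assert (Derive (Derive g) t0 < 0) by (apply S; unfold c in *; lra). lra.
    + intros eps ep. destruct (L eps ep) as [M HM]. exists M. intros t0 ht0. unfold h.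
      rewrite Rabs_Ropp. auto.
exact Hq. Qed.

Theorem lemma2p5 (f : R -> R) :
  in_hardy f ->
  (forall n : nat, is_lim (fun t => f t / / (t ^ n)) p_infty 0) ->
  forall l n : nat, is_lim (fun t => Derive_n f l t / / (t ^ n)) p_infty 0.
Proof.
  intros [H [hH Hf]] hyp.
  assert (Qf : Q f).
  { intros n eps ep. specialize (hyp n). apply is_lim_spec in hyp.
    destruct (hyp (mkposreal eps ep)) as [M HM]. exists (Rmax M 0). intros t Ht.
    pose proof (Rmax_l M 0). pose proof (Rmax_r M 0).
    specialize (HM t ltac:(lra)). simpl in HM. rewrite Rminus_0_r in HM. unfold Rdiv in HM. rewrite Rinv_inv in HM. exact HM. }
  assert (all : forall l, H (Derive_n f l) /\ Q (Derive_n f l)).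
  { induction l as [|l [IH1 IH2]]. split; [exact Hf|exact Qf].
    exact (step H _ hH IH1 IH2). }
  intros l n. apply is_lim_spec. intros eps.
  destruct (all l) as [_ Ql]. destruct (Ql n eps (cond_pos eps)) as [M HM].
  exists (Rmax M 0). intros t Ht.
  pose proof (Rmax_l M 0). pose proof (Rmax_r M 0).
  rewrite Rminus_0_r. unfold Rdiv. rewrite Rinv_inv. apply HM. lra.
Qed.
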